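(* $\dim_{\mathbb C}V_k\le|\mathbf B_k|$, where $|\mathbf B_k|=\frac14(u-1)(w+1)$ if $u$ is odd and $|\mathbf B_k|=\frac14uw-\frac12(v-1-u)$ if $u$ is even.
   Context: $u,v\in\mathbb Z_{\ge2}$ coprime with $u<2v$; $k=-2+u/v<0$, $w=2v-u$, $\mathbb L=2w\mathbb Z$. $\chi^{u,v}_{r,s}(q)=\eta(q)^{-1}\sum_{n\in\mathbb Z}(q^{(2uvn+vr-us)^2/4uv}-q^{(2uvn+vr+us)^2/4uv})$, $\eta$ Dedekind's eta; for $\mu\in\frac1v\mathbb Z$, $\theta'_{\mu+\mathbb L}(q)=-\frac1{2w}\sum_{\lambda\in\mu+\mathbb L}\lambda q^{-\lambda^2/4k}$; for $1\le r\le u-1$, $\mu\in r-1+2\mathbb Z$, $\Gamma^\mu_r=\sum_{s=1}^{v-1}(-1)^{s-1}\frac{\chi^{u,v}_{r,s}}{\eta}[\theta'_{\mu+sk+\mathbb L}-\theta'_{\mu-sk+\mathbb L}]$. $V_k$ is the span of all such $\Gamma^\mu_r$. $\mathbf B_k$ is the set of integer pairs $(\mu;r)$ with $\mu\equiv r-1\pmod2$ and: if $u$ odd, $0\le\mu\le w$, $1\le r\le\frac{u-1}2$; if $u$ even, either $0\le\mu\le w$, $1\le r\le\frac u2-1$, or $0\le\mu\le\frac w2$, $r=\frac u2$. *)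

(* Defs.v *)
From HB Require Import structures.
From mathcomp Require Import all_boot all_order all_algebra all_field.
From Stdlib Require Import ClassicalEpsilon.
Set Implicit Arguments. Unset Strict Implicit. Unset Printing Implicit Defensive.
Import Order.TTheory GRing.Theory Num.Theory.
Local Open Scope ring_scope.

(* A formal q-series with rational exponents: e |-> coefficient of q^e. *)
Definition qser := rat -> algC.

(* Formal (finite) sum of a i over the indices i satisfying P, meaningful when
   the set {i | P i} is finite (enumerated by some duplicate-free list);
   it is 0 by convention otherwise (never happens for the series below). *)
Definition fsum (I : eqType) (P : pred I) (a : I -> algC) : algC :=
  let spec := fun s : seq I => uniq s /\ forall i, (i \in s) = P i in
  match excluded_middle_informative (exists s, spec s) with
  | left _ => \sum_(i <- epsilon (inhabits [::]) spec) a i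
  | right _ => 0
  end.

(* Cauchy product of two q-series (exponents bounded below and discrete). *)
Definition qmul (f g : qser) : qser := fun e =>
  fsum (fun p : rat * rat => [&& p.1 + p.2 == e, f p.1 != 0 & g p.2 != 0])
       (fun p => f p.1 * g p.2).

(* Coefficient of q^m in prod_{n>=1} (1 - q^n)^{-1} (number of partitions),
   read off a polynomial truncation prod_{i=1}^m sum_{j=0}^m q^(i j). *)
Definition pnum (m : nat) : algC :=
  (\prod_(1 <= i < m.+1) \sum_(j < m.+1) ('X^(i * j) : {poly algC}))`_m.

(* eta(q)^{-1} = q^{-1/24} prod_{n>=1} (1-q^n)^{-1}. *)
Definition etaInv : qser := fun e =>
  let x := e + 24%:R^-1 in
  if (denq x == 1) && (0 <= numq x)%R then pnum `|numq x|%N else 0.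

(* chi^{u,v}_{r,s}(q) = eta^{-1} sum_n (q^{(2uvn+vr-us)^2/4uv} - q^{(2uvn+vr+us)^2/4uv}) *)
Definition chi (u v r s : nat) : qser :=
  let A (n : int) : rat := ((2 * u * v)%:R * n%:~R + (v * r)%:R - (u * s)%:R) ^+ 2
                            / (4 * u * v)%:R in
  let B (n : int) : rat := ((2 * u * v)%:R * n%:~R + (v * r)%:R + (u * s)%:R) ^+ 2
                            / (4 * u * v)%:R in
  qmul etaInv (fun e => fsum (fun n : int => A n == e) (fun _ => 1)
                       - fsum (fun n : int => B n == e) (fun _ => 1)).

Definition kk (u v : nat) : rat := -2 + u%:R / v%:R.
Definition ww (u v : nat) : rat := 2 * v%:R - u%:R.

(* theta'_{c + L}(q) = -1/(2w) sum_{lambda in c + 2wZ} lambda q^{-lambda^2/4k} *)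
Definition thetaP (u v : nat) (c : rat) : qser := fun e =>
  let lam (j : int) : rat := c + 2 * ww u v * j%:~R in
  - (ratr (2 * ww u v))^-1 *
    fsum (fun j : int => lam j ^+ 2 * (- (4 * kk u v)^-1) == e)
         (fun j => ratr (lam j)).

(* Gamma^mu_r = sum_{s=1}^{v-1} (-1)^{s-1} (chi_{r,s}/eta) [theta'_{mu+sk+L} - theta'_{mu-sk+L}] *)
Definition Gamma (u v : nat) (mu : int) (r : nat) : qser := fun e =>
  \sum_(1 <= s < v)
    (-1) ^+ (s.-1) *
    qmul (qmul (chi u v r s) etaInv)
         (fun e' => thetaP u v (mu%:~R + s%:R * kk u v) e'
                  - thetaP u v (mu%:~R - s%:R * kk u v) e') e.

Definition inBk (u v : nat) (mu r : int) : bool :=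
  let w : int := (2 * v)%:Z - u%:Z in
  [&& (2 %| mu - (r - 1))%Z, 0 <= mu &
    if odd u then [&& mu <= w, 1 <= r & 2 * r <= u%:Z - 1]
    else [&& mu <= w, 1 <= r & 2 * r <= u%:Z - 2]
         || [&& 2 * mu <= w & 2 * r == u%:Z]].

(* |B_k|: all members satisfy 0 <= mu <= w < 2v and 1 <= r <= u. *)
Definition card_Bk (u v : nat) : nat :=
  size [seq p <- [seq (m%:Z, r%:Z) | m <- iota 0 (2 * v), r <- iota 0 u.+1]
          | inBk u v p.1 p.2].

(* Main.v *)
Require Import Defs.
From HB Require Import structures.
From mathcomp Require Import all_boot all_order all_algebra all_field.
From mathcomp Require Import zify ring lra.
From Stdlib Require Import ClassicalEpsilon FunctionalExtensionality.
Import Order.TTheory GRing.Theory Num.Theory.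
Local Open Scope ring_scope.
Set Implicit Arguments. Unset Strict Implicit. Unset Printing Implicit Defensive.

Lemma fsum_seq (I : eqType) (P : pred I) (a : I -> algC) (s : seq I) :
  uniq s -> (forall i, (i \in s) = P i) -> fsum P a = \sum_(i <- s) a i.
Proof.
move=> us hs; rewrite /fsum.
case: excluded_middle_informative => [ex|nex]; last by exfalso; apply: nex; exists s.
set t := epsilon _ _.
have [ut ht] : uniq t /\ (forall i, (i \in t) = P i).
  by apply: (epsilon_spec (inhabits [::]) (fun s => uniq s /\ _)).
apply: perm_big; apply: uniq_perm => // i; by rewrite ht hs.
Qed.

Lemma fsum_none (I : eqType) (P : pred I) (a : I -> algC) :
  ~ (exists s : seq I, uniq s /\ forall i, (i \in s) = P i) -> fsum P a = 0.
Proof.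
move=> nex; rewrite /fsum; case: excluded_middle_informative => [ex|//].
exfalso; exact: nex ex.
Qed.

Lemma fsum_reindex (I J : eqType) (P : pred I) (Q : pred J) (a : J -> algC)
  (h : I -> J) (h' : J -> I) :
  cancel h h' -> cancel h' h -> (forall i, Q (h i) = P i) ->
  fsum Q a = fsum P (fun i => a (h i)).
Proof.
move=> hK h'K hQ.
have [[s [us hs]]|nex] := excluded_middle_informative
   (exists s : seq I, uniq s /\ forall i, (i \in s) = P i).
  have us' : uniq (map h s) by rewrite map_inj_uniq //; apply: can_inj hK.
  have hs' : forall j, (j \in map h s) = Q j.
    move=> j; by rewrite -{1}(h'K j) (mem_map (can_inj hK)) hs -hQ h'K.
  by rewrite (fsum_seq (fun i => a (h i)) us hs) (fsum_seq a us' hs') big_map.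
rewrite (@fsum_none I P) // (@fsum_none J Q) //.
move=> [t [ut ht]]; apply: nex; exists (map h' t); split.
  by rewrite map_inj_uniq //; apply: can_inj h'K.
move=> i; by rewrite -{1}(hK i) (mem_map (can_inj h'K)) ht hQ.
Qed.

Lemma fsum_ext (I : eqType) (P : pred I) (a b : I -> algC) :
  (forall i, a i = b i) -> fsum P a = fsum P b.
Proof.
move=> hab; rewrite /fsum; case: excluded_middle_informative => // _.
by apply: eq_bigr => i _; apply: hab.
Qed.

Lemma fsumN (I : eqType) (P : pred I) (a : I -> algC) :
  fsum P (fun i => - a i) = - fsum P a.
Proof.
rewrite /fsum; case: excluded_middle_informative => _; last by rewrite oppr0.
by rewrite sumrN.
Qed.

Lemma fsumMl (I : eqType) (P : pred I) (a : I -> algC) c :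
  fsum P (fun i => c * a i) = c * fsum P a.
Proof.
rewrite /fsum; case: excluded_middle_informative => _; last by rewrite mulr0.
by rewrite mulr_sumr.
Qed.

Lemma fsum_predext (I : eqType) (P Q : pred I) (a : I -> algC) :
  (forall i, P i = Q i) -> fsum P a = fsum Q a.
Proof.
move=> hPQ; rewrite (@fsum_reindex I I Q P a id id) //.
Qed.

Lemma fsum_reindex2 (I J : eqType) (P : pred I) (Q : pred J) (b : I -> algC)
  (a : J -> algC) (h : I -> J) (h' : J -> I) :
  cancel h h' -> cancel h' h -> (forall i, Q (h i) = P i) ->
  (forall i, b i = a (h i)) -> fsum P b = fsum Q a.
Proof.
move=> hK h'K hQ hb; rewrite (@fsum_reindex I J P Q a h h') //.
exact: fsum_ext.
Qed.

Lemma thetaP_shift u v c (m : int) :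
  thetaP u v (c + 2 * ww u v * m%:~R) = thetaP u v c.
Proof.
apply: functional_extensionality => e; rewrite /thetaP; congr (_ * _).
have E : forall j : int, c + 2 * ww u v * m%:~R + 2 * ww u v * j%:~R
                       = c + 2 * ww u v * (j + m)%:~R.
  by move=> j; rewrite intrD; ring.
apply: (@fsum_reindex2 _ _ _ _ _ _ (fun j : int => j + m) (fun j => j - m)).
- by move=> j; rewrite addrK.
- by move=> j; rewrite subrK.
- by move=> j /=; rewrite E.
- by move=> j; rewrite E.
Qed.

Lemma thetaP_neg u v c e : thetaP u v (- c) e = - thetaP u v c e.
Proof.
rewrite /thetaP -mulrN; congr (_ * _).
have E : forall j : int, c + 2 * ww u v * (- j)%:~R
                       = - (- c + 2 * ww u v * j%:~R).
  by move=> j; rewrite intrN; ring.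
rewrite -fsumN.
apply: (@fsum_reindex2 _ _ _ _ _ _ (fun j : int => - j) (fun j => - j)).
- by move=> j; rewrite opprK.
- by move=> j; rewrite opprK.
- by move=> j /=; rewrite E sqrrN.
- by move=> j; rewrite E rmorphN opprK.
Qed.

Lemma chi_sym u v r s : (r <= u)%N -> (s <= v)%N ->
  chi u v (u - r) (v - s) = chi u v r s.
Proof.
move=> hr hs; rewrite /chi; congr (qmul etaInv _).
apply: functional_extensionality => e; congr (_ - _).
- have EA : forall n : int,
    ((2*u*v)%:R * (- n)%:~R + (v*r)%:R - (u*s)%:R : rat)
    = - ((2*u*v)%:R * n%:~R + (v*(u-r))%:R - (u*(v-s))%:R).
    by move=> n; rewrite !natrM !natrB // intrN; ring.
  apply: (@fsum_reindex2 _ _ _ _ _ _ (fun n : int => - n) (fun n => - n)) => //.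
  + by move=> n; rewrite opprK.
  + by move=> n; rewrite opprK.
  + by move=> n /=; rewrite EA sqrrN.
- have EB : forall n : int,
    ((2*u*v)%:R * (- n - 1)%:~R + (v*r)%:R + (u*s)%:R : rat)
    = - ((2*u*v)%:R * n%:~R + (v*(u-r))%:R + (u*(v-s))%:R).
    by move=> n; rewrite !natrM !natrB // intrB intrN; ring.
  apply: (@fsum_reindex2 _ _ _ _ _ _ (fun n : int => - n - 1) (fun n => - n - 1)) => //.
  + by move=> n; ring.
  + by move=> n; ring.
  + by move=> n /=; rewrite EB sqrrN.
Qed.

Lemma qmulN (f g : qser) e : qmul f (fun x => - g x) e = - qmul f g e.
Proof.
rewrite /qmul -fsumN.
rewrite (@fsum_predext _ _ (fun p : rat * rat => [&& p.1 + p.2 == e, f p.1 != 0 & g p.2 != 0])).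
  by apply: fsum_ext => p; rewrite mulrN.
by move=> p; rewrite oppr_eq0.
Qed.

Definition WW (u v : nat) : int := (2 * v)%:Z - u%:Z.

Lemma WWE u v : ((WW u v)%:~R : rat) = ww u v.
Proof. by rewrite /WW /ww intrB -!pmulrn natrM. Qed.

Lemma Gamma_per u v (mu m : int) r :
  Gamma u v (mu + 2 * WW u v * m) r = Gamma u v mu r.
Proof.
apply: functional_extensionality => e; rewrite /Gamma.
apply: eq_bigr => s _; congr (_ * qmul _ _ e).
apply: functional_extensionality => e'.
have -> : ((mu + 2 * WW u v * m)%:~R + s%:R * kk u v : rat)
   = (mu%:~R + s%:R * kk u v) + 2 * ww u v * m%:~R.
  by rewrite intrD !intrM WWE; ring.
have -> : ((mu + 2 * WW u v * m)%:~R - s%:R * kk u v : rat)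
   = (mu%:~R - s%:R * kk u v) + 2 * ww u v * m%:~R.
  by rewrite intrD !intrM WWE; ring.
by rewrite !thetaP_shift.
Qed.

Lemma Gamma_neg u v (mu : int) r : Gamma u v (- mu) r = Gamma u v mu r.
Proof.
apply: functional_extensionality => e; rewrite /Gamma.
apply: eq_bigr => s _; congr (_ * qmul _ _ e).
apply: functional_extensionality => e'.
have -> : ((- mu)%:~R + s%:R * kk u v : rat) = - (mu%:~R - s%:R * kk u v).
  by rewrite intrN; ring.
have -> : ((- mu)%:~R - s%:R * kk u v : rat) = - (mu%:~R + s%:R * kk u v).
  by rewrite intrN; ring.
by rewrite !thetaP_neg opprK addrC.
Qed.

Lemma Gamma_refl u v (mu : int) r : (1 <= v)%N -> (r <= u)%N ->
  Gamma u v mu (u - r) = (fun e => - (-1) ^+ v * Gamma u v (mu - WW u v) r e).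
Proof.
move=> hv hr; apply: functional_extensionality => e; rewrite /Gamma mulr_sumr.
rewrite big_nat_rev /=; apply: eq_big_nat => s /andP[hs1 hsv].
have -> : (1 + v - s.+1 = v - s)%N by lia.
rewrite (chi_sym hr (ltnW hsv)).
have vnz : (v%:R : rat) != 0 by rewrite pnatr_eq0 -lt0n.
have -> : (fun e' => thetaP u v (mu%:~R + (v - s)%:R * kk u v) e'
                   - thetaP u v (mu%:~R - (v - s)%:R * kk u v) e')
  = (fun e' => - (thetaP u v ((mu - WW u v)%:~R + s%:R * kk u v) e'
                   - thetaP u v ((mu - WW u v)%:~R - s%:R * kk u v) e')).
  apply: functional_extensionality => e'.
  have -> : (mu%:~R + (v - s)%:R * kk u v : rat)
          = (mu - WW u v)%:~R - s%:R * kk u v.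
    rewrite intrB WWE /ww /kk natrB; last by lia.
    by field.
  have -> : (mu%:~R - (v - s)%:R * kk u v : rat)
          = ((mu - WW u v)%:~R + s%:R * kk u v) + 2 * ww u v * (1%:~R).
    rewrite intrB WWE /ww /kk natrB; last by lia.
    by field.
  rewrite thetaP_shift; ring.
rewrite qmulN.
have sg : ((-1) ^+ (v - s).-1 : algC) = (-1) ^+ v * (-1) ^+ s.-1.
  have sq : ((-1) ^+ s.-1 * (-1) ^+ s.-1 : algC) = 1.
    by rewrite -exprMn mulrNN mulr1 expr1n.
  have t2 : ((-1) ^+ 2 : algC) = 1 by rewrite expr2 mulrNN mulr1.
  have Hv : v = ((v - s).-1 + s.-1 + 2)%N by lia.
  rewrite [in RHS]Hv.
  by rewrite !exprD t2 mulr1 -mulrA sq mulr1.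
rewrite sg; ring.
Qed.

Lemma red_mu u v (mu : int) r : (0 < WW u v)%R ->
  exists m : int, [/\ (0 <= m)%R, (m <= WW u v)%R, (2 %| m - mu)%Z &
                      Gamma u v mu r = Gamma u v m r].
Proof.
move=> hW.
have hmu : mu = (mu %% (2 * WW u v))%Z + 2 * WW u v * (mu %/ (2 * WW u v))%Z by lia.
have E : Gamma u v mu r = Gamma u v (mu %% (2 * WW u v))%Z r.
  by rewrite {1}hmu Gamma_per.
case: (boolP ((mu %% (2 * WW u v))%Z <= WW u v)%R) => hle.
  exists (mu %% (2 * WW u v))%Z; split => //; lia.
exists (2 * WW u v - (mu %% (2 * WW u v))%Z); split; try lia.
rewrite E -Gamma_neg.
have -> : 2 * WW u v - (mu %% (2 * WW u v))%Z
        = - (mu %% (2 * WW u v))%Z + 2 * WW u v * 1 by ring.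
by rewrite Gamma_per.
Qed.

Lemma reduce u v (mu : int) (r : nat) :
  (2 <= u)%N -> (2 <= v)%N -> (u < 2 * v)%N ->
  (1 <= r <= u - 1)%N -> (2 %| mu - (r%:Z - 1))%Z ->
  exists (m : int) (r' : nat) (c : algC),
    [/\ (0 <= m)%R, inBk u v m r'%:Z, (m < (2 * v)%:Z)%R, (r' <= u)%N &
        Gamma u v mu r = (fun e => c * Gamma u v m r' e)].
Proof.
move=> hu hv huv hr hpar.
have hW : (0 < WW u v)%R by rewrite /WW; lia.
have [r1 [mu1 [c1 [h1r1 h2r1 hp1 E1]]]] : exists (r1 : nat) (mu1 : int) (c1 : algC),
   [/\ (1 <= r1)%N, (2 * r1 <= u)%N, (2 %| mu1 - (r1%:Z - 1))%Z &
       Gamma u v mu r = (fun e => c1 * Gamma u v mu1 r1 e)].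
  case: (leqP (2 * r) u) => h2r.
    exists r, mu, 1; split => //; try lia.
    by apply: functional_extensionality => e; rewrite mul1r.
  exists (u - r)%N, (mu - WW u v), (- (-1) ^+ v); split; try (rewrite /WW; lia).
  have -> : r = (u - (u - r))%N by lia.
  rewrite Gamma_refl //; [|lia|lia].
  by have -> : (u - (u - (u - r)))%N = (u - r)%N by lia.
have [m [hm0 hmW hpm E2]] := red_mu mu1 r1 hW.
have [m' [c2 [hm'0 hm'W hin E3]]] : exists (m' : int) (c2 : algC),
   [/\ (0 <= m')%R, (m' <= WW u v)%R, inBk u v m' r1%:Z &
       Gamma u v m r1 = (fun e => c2 * Gamma u v m' r1 e)].
  case: (boolP (odd u || (2 * r1 < u)%N)) => hc.
    exists m, 1; split => //.
      rewrite /inBk /WW in hmW *; case: ifP => ho; lia.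
    by apply: functional_extensionality => e; rewrite mul1r.
  case: (boolP (2 * m <= WW u v)%R) => hc2.
    exists m, 1; split => //.
      rewrite /inBk /WW in hmW hc2 *; case: ifP => ho; lia.
    by apply: functional_extensionality => e; rewrite mul1r.
  exists (WW u v - m), (- (-1) ^+ v); split; try lia.
    rewrite /inBk /WW in hmW hc2 *; case: ifP => ho; lia.
  rewrite [in LHS](_ : r1 = (u - r1)%N); last lia.
  rewrite Gamma_refl //; [|lia|lia].
  have -> : m - WW u v = - (WW u v - m) by ring.
  by rewrite Gamma_neg.
exists m', r1, (c1 * c2); split => //.
- rewrite /WW in hmW hm'W; lia.
- lia.
apply: functional_extensionality => e.
by rewrite E1 E2 E3 mulrA.
Qed.

Lemma sumA N K c : (\sum_(0 <= r < N) (if (1 <= r) && (r <= K) then c else 0) = minn N.-1 K * c)%N.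
Proof.
elim: N => [|N IH]; first by rewrite big_geq //; lia.
rewrite big_nat_recr //= IH.
case: ifP => h; nia.
Qed.
Lemma sumB N K : (\sum_(0 <= r < N) (if (1 <= r) && (r <= K) then odd r : nat else 0) = (minn N.-1 K).+1./2)%N.
Proof.
elim: N => [|N IH]; first by rewrite big_geq //; lia.
rewrite big_nat_recr //= IH.
case: ifP => h; lia.
Qed.
Lemma sumC N a x : (\sum_(0 <= r < N) (if r == a then x else 0) = if a < N then x else 0)%N.
Proof.
elim: N => [|N IH]; first by rewrite big_geq //; lia.
rewrite big_nat_recr //= IH.
case: ifP => h; case: ifP => h2; case: ifP => h3; lia.
Qed.
Lemma cnt_par N W b : (\sum_(0 <= m < N) ((m <= W) && (odd m == b) : nat) = if b then (minn N W.+1)./2 else (minn N W.+1).+1./2)%N.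
Proof.
elim: N => [|N IH]; first by rewrite big_geq //; case: b; lia.
rewrite big_nat_recr //= IH.
case: b IH => /= IH; lia.
Qed.
Lemma sum_count (T : Type) (a : pred T) s : (\sum_(i <- s) (a i : nat) = count a s)%N.
Proof. elim: s => [|x s IH]; first by rewrite big_nil. by rewrite big_cons IH. Qed.
Lemma count_allpairs (S T R : Type) (f : S -> T -> R) (P : pred R) s t :
  (count P [seq f x y | x <- s, y <- t] = \sum_(x <- s) count (fun y => P (f x y)) t)%N.
Proof. elim: s => [|x s IH]; first by rewrite big_nil.
by rewrite allpairs_cons count_cat count_map IH big_cons. Qed.

Local Open Scope nat_scope.

Lemma inner_sum u v r : (u < 2 * v)%N ->
  (\sum_(0 <= m < 2 * v) (inBk u v (m%:Z, r%:Z).1 (m%:Z, r%:Z).2 : nat) =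
   if odd u then (if (1 <= r) && (2 * r <= u - 1) then (2 * v - u + 1 + odd r)./2 else 0)
   else (if (1 <= r) && (2 * r <= u - 2) then (2 * v - u + 1 + odd r)./2 else 0)
      + (if 2 * r == u then ((2 * v - u)./2 + 1 + odd r)./2 else 0))%N.
Proof.
move=> huv.
have cnt : forall W, (W < 2 * v)%N ->
   (\sum_(0 <= m < 2 * v) ((m <= W) && (odd m == ~~ odd r) : nat) = (W + 1 + odd r)./2)%N.
  move=> W hW; rewrite cnt_par; case: (odd r) => /=; lia.
have E : forall m, inBk u v (m%:Z, r%:Z).1 (m%:Z, r%:Z).2 =
   if odd u then ((1 <= r) && (2 * r <= u - 1)) && ((m <= 2 * v - u) && (odd m == ~~ odd r))
   else (((1 <= r) && (2 * r <= u - 2)) && ((m <= 2 * v - u) && (odd m == ~~ odd r)))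
     || ((2 * r == u) && ((m <= (2 * v - u)./2) && (odd m == ~~ odd r))).
  move=> m; rewrite /inBk /=; case: ifP => ho; apply/idP/idP; lia.
under eq_bigr => m _ do rewrite E.
case: ifP => ho.
  case: ifP => hc /=.
    rewrite cnt //; lia.
  by rewrite big1_eq.
have HH : forall m, (((((1 <= r) && (2 * r <= u - 2)) && ((m <= 2 * v - u) && (odd m == ~~ odd r)))
     || ((2 * r == u) && ((m <= (2 * v - u)./2) && (odd m == ~~ odd r)))) : nat)
   = ((((1 <= r) && (2 * r <= u - 2)) && ((m <= 2 * v - u) && (odd m == ~~ odd r))) : nat)
     + ((2 * r == u) && ((m <= (2 * v - u)./2) && (odd m == ~~ odd r)) : nat).
  move=> m; case: (boolP ((1 <= r) && (2 * r <= u - 2))) => h1;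
    case: (boolP (2 * r == u)) => h2 /=.
  - exfalso; move/andP: h1 => [h1a h1b]; move/eqP: h2 => h2; lia.
  - by rewrite orbF addn0.
  - by [].
  - by [].
under eq_bigr => m _ do rewrite HH.
rewrite big_split /=; congr (_ + _)%N.
  case: ifP => hc /=.
    rewrite cnt //; lia.
  by rewrite big1_eq.
case: ifP => hc /=.
  rewrite cnt //; lia.
by rewrite big1_eq.
Qed.

Lemma card_nat u v : (u < 2 * v)%N ->
  card_Bk u v = (\sum_(0 <= r < u.+1)
   if odd u then (if (1 <= r) && (2 * r <= u - 1) then (2 * v - u + 1 + odd r)./2 else 0)
   else (if (1 <= r) && (2 * r <= u - 2) then (2 * v - u + 1 + odd r)./2 else 0)
      + (if 2 * r == u then ((2 * v - u)./2 + 1 + odd r)./2 else 0))%N.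
Proof.
move=> huv.
rewrite /card_Bk size_filter count_allpairs.
have hi : forall n, iota 0 n = index_iota 0 n by move=> n; rewrite /index_iota subn0.
under eq_bigr => m _ do rewrite -sum_count hi.
rewrite hi exchange_big /=.
by apply: eq_bigr => r _; rewrite inner_sum.
Qed.

Local Open Scope ring_scope.

Lemma card_formula u v :
  (2 <= u)%N -> (2 <= v)%N -> coprime u v -> (u < 2 * v)%N ->
  (card_Bk u v)%:R =
       (if odd u then (u%:R - 1) * (ww u v + 1) / 4
        else u%:R * ww u v / 4 - (v%:R - 1 - u%:R) / 2 :> rat).
Proof.
move=> hu hv huv hlt.
rewrite card_nat //.
case: ifP => ho.
  have -> : (\sum_(0 <= r < u.+1)
     (if (1 <= r) && (2 * r <= u - 1) then (2 * v - u + 1 + odd r)./2 else 0))%N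
     = (\sum_(0 <= r < u.+1)
     (if (1 <= r) && (r <= u./2) then v - u./2 else 0))%N.
    apply: eq_bigr => r _; repeat (case: ifP => ?); lia.
  rewrite sumA.
  have -> : minn u.+1.-1 u./2 = u./2 by lia.
  have hu2 : u = (2 * u./2 + 1)%N by lia.
  rewrite natrM natrB; last lia.
  rewrite /ww [in RHS]hu2 natrD natrM.
  by field.
have ev : odd v.
  case: (boolP (odd v)) => // hv2; move: huv; rewrite /coprime => /eqP hg.
  have : (2 %| gcdn u v)%N by rewrite div.dvdn_gcd !dvdn2 ho hv2.
  by rewrite hg.
have -> : (\sum_(0 <= r < u.+1)
     ((if (1 <= r) && (2 * r <= u - 2) then (2 * v - u + 1 + odd r)./2 else 0)
      + (if 2 * r == u then ((2 * v - u)./2 + 1 + odd r)./2 else 0)))%N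
   = (\sum_(0 <= r < u.+1)
     ((if (1 <= r) && (r <= u./2 - 1) then v - u./2 else 0)
      + (if (1 <= r) && (r <= u./2 - 1) then odd r : nat else 0)
      + (if r == u./2 then (v - u./2 + 1 + odd (u./2))./2 else 0)))%N.
  apply: eq_bigr => r _; repeat (case: ifP => ?); lia.
rewrite !big_split /= sumA sumB sumC.
have -> : minn u.+1.-1 (u./2 - 1) = (u./2 - 1)%N by lia.
have -> : (u./2 < u.+1)%N by lia.
set a := u./2.
have hu2 : u = (2 * a)%N by rewrite /a; lia.
set h := (v - a)%N.
have hv2 : v = (a + h)%N by rewrite /h; lia.
match goal with |- ((?X)%:R = _) =>
  have key : (2 * X + h = 2 * (a * h) + a + 1)%N;
  [rewrite /h; nia | move: key; generalize X; intros C key] end.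
move/(congr1 (fun n : nat => (n%:R : rat))): key => /= kr.
rewrite !natrD !natrM in kr.
rewrite /ww hu2 hv2 ?natrD ?natrM.
rewrite (_ : C%:R = ((C%:R + (C%:R + 0) + h%:R) - h%:R) / 2 :> rat); last by field.
rewrite kr; by field.
Qed.

Theorem mainTheorem12 (u v : nat)
  (hu : (2 <= u)%N) (hv : (2 <= v)%N) (huv : coprime u v) (hlt : (u < 2 * v)%N) :
  (* dim V_k <= |B_k| : V_k lies in the span of |B_k| series *)
  (exists g : 'I_(card_Bk u v) -> qser,
     forall (mu : int) (r : nat),
       (1 <= r <= u - 1)%N -> (2 %| mu - (r%:Z - 1))%Z ->
       exists c : 'I_(card_Bk u v) -> algC,
         Gamma u v mu r = (fun e => \sum_i c i * g i e))
  /\ (card_Bk u v)%:R =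
       (if odd u then (u%:R - 1) * (ww u v + 1) / 4
        else u%:R * ww u v / 4 - (v%:R - 1 - u%:R) / 2 :> rat).
Proof.
split; last exact: card_formula.
set L := [seq p <- [seq (m%:Z, r%:Z) | m <- iota 0 (2 * v), r <- iota 0 u.+1]
          | inBk u v p.1 p.2].
have hL : size L = card_Bk u v by [].
exists (fun i => Gamma u v (nth ((0 : int), (0 : int)) L i).1 `|(nth ((0 : int), (0 : int)) L i).2|%N).
move=> mu r hr hpar.
have [m [r' [c0 [hm0 hin hm2 hr' E]]]] := reduce hu hv hlt hr hpar.
set p : int * int := (m, r'%:Z).
have pL : p \in L.
  rewrite mem_filter; apply/andP; split; first exact: hin.
  have -> : p = ((`|m|%N)%:Z, r'%:Z) by rewrite /p; congr pair; lia.
  apply: allpairs_f; rewrite mem_iota; lia.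
have ip : (index p L < card_Bk u v)%N by rewrite -hL index_mem.
pose i0 : 'I_(card_Bk u v) := Ordinal ip.
exists (fun i => if i == i0 then c0 else 0).
rewrite E; apply: functional_extensionality => e.
rewrite (bigD1 i0) //= eqxx big1 ?addr0.
  by rewrite nth_index.
by move=> i /negbTE ->; rewrite mul0r.
Qed.
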